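(* Consider the atomic model under the Shapley scheme with one large player of stake $a$ and all other players of stake $1$. If a Nash equilibrium partition contains two pools $S_1,S_2$ each consisting only of players of stake $1$, then $\big||S_1|-|S_2|\big|\le 1$.
   Context: Atomic model with threshold $h$: one player has stake $a$ and all others stake $1$, where $h,a$ are integers with $2\le a\le h-1$. Pools partition the players; a pool $S$ has reward $\rho(S)=1$ if its total stake is at least $h$ (winning) and $0$ otherwise. Shapley scheme: player $i$ in pool $S$ receives $\phi_i(S)=\sum_{T\subseteq S\setminus\{i\}}\frac{|T|!(|S|-|T|-1)!}{|S|!}(\rho(T\cup\{i\})-\rho(T))$. A partition into winning pools is a Nash equilibrium if no player can strictly increase her payment by moving to another pool of the partition or opening a new pool alone. *)

(* Defs.v *)
From mathcomp Require Import all_boot all_order all_algebra.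
Set Implicit Arguments. Unset Strict Implicit. Unset Printing Implicit Defensive.
Import Order.TTheory GRing.Theory Num.Theory.

Section Model.
Variables (T : finType) (p0 : T) (a h : nat).

Definition stake (i : T) : nat := if i == p0 then a else 1.

Definition total_stake (S : {set T}) : nat := \sum_(i in S) stake i.

Definition rho (S : {set T}) : rat := if h <= total_stake S then 1%R else 0%R.

Definition shapley (i : T) (S : {set T}) : rat :=
  (\sum_(U : {set T} | U \subset S :\ i)
     ((#|U|`! * (#|S| - #|U| - 1)`!)%:R / (#|S|`!)%:R) * (rho (i |: U) - rho U))%R.

Definition winning (S : {set T}) : Prop := h <= total_stake S.

Definition nash_equilibrium (P : {set {set T}}) : Prop :=
  partition P [set: T] /\
  (forall S, S \in P -> winning S) /\
  (forall S i, S \in P -> i \in S ->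
     (forall S', S' \in P -> S' != S -> (shapley i (i |: S') <= shapley i S)%R) /\
     (shapley i [set i] <= shapley i S)%R).
End Model.

(* Main.v *)
Require Import Defs.
From mathcomp Require Import all_boot all_order all_algebra.
From mathcomp Require Import zify.
Import Order.TTheory GRing.Theory Num.Theory.

Lemma tstake_card (T : finType) (p0 : T) (a : nat) (U : {set T}) :
  p0 \notin U -> total_stake p0 a U = #|U|.
Proof.
move=> nU; rewrite /total_stake -sum1_card; apply: eq_bigr => j jU.
rewrite /stake; case: eqP => // E; by move: nU; rewrite -E jU.
Qed.

Lemma shap_small (T : finType) (p0 : T) (a h : nat) (S : {set T}) (i : T) :
  p0 \notin S -> i \in S -> h <= #|S| -> 0 < h ->
  shapley p0 a h i S = ((#|S|%:R)^-1 : rat)%R.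
Proof.
move=> nS iS hS h0; rewrite /shapley.
case: h h0 hS => // k _ hS.
set n := #|S|.
set c : rat := ((k`! * (n - k.+1)`!)%:R / (n`!)%:R)%R.
transitivity (\sum_(U : {set T} | (U \subset S :\ i) && (#|U| == k)) c)%R.
  rewrite big_mkcondr /=; apply: eq_bigr => U sU.
  have nU : p0 \notin U.
    apply/negP => pU; move/subsetP: sU => /(_ _ pU); rewrite in_setD1 => /andP[_ pS].
    by rewrite pS in nS.
  have iU : i \notin U.
    by apply/negP => /(subsetP sU); rewrite in_setD1 eqxx.
  have niU : p0 \notin i |: U.
    rewrite in_setU1 negb_or nU andbT; apply/negP => /eqP E; by rewrite E iS in nS.
  rewrite /rho !tstake_card // cardsU1 iU /= add1n.
  case: (eqVneq #|U| k) => E.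
    rewrite E ltnSn ltnn subr0 mulr1 /c.
    by rewrite (_ : n - k - 1 = n - k.+1)%N //; lia.
  have -> : (k < #|U|.+1) = (k < #|U|) by apply/idP/idP => H; lia.
  by case: (k < #|U|); rewrite subrr mulr0.
rewrite sumr_const.
have -> : #|[pred U : {set T} | (U \subset S :\ i) && (#|U| == k)]| = 'C(n.-1, k).
  by rewrite -cardsE cards_draws /n (cardsD1 i S) iS.
rewrite -(mulr_natr c) /c mulrAC -natrM.
have e1 : (k`! * (n - k.+1)`! * 'C(n.-1, k))%N = n.-1`!.
  rewrite mulnC -(bin_fact (n := n.-1) (m := k)); last by rewrite /n; lia.
  by rewrite (_ : n.-1 - k = n - k.+1)%N //; rewrite /n; lia.
have e2 : n`! = (n * n.-1`!)%N.
  have : n = n.-1.+1 by rewrite /n; lia.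
  by move=> E; rewrite {1}E factS -E.
by rewrite e1 e2 natrM invfM mulrCA mulfV ?mulr1 // pnatr_eq0 -lt0n fact_gt0.
Qed.

Lemma one_dir (T : finType) (p0 : T) (a h : nat)
  (ha : 2 <= a) (hah : a <= h - 1)
  (P : {set {set T}}) (HP : nash_equilibrium p0 a h P)
  (S1 S2 : {set T}) (H1 : S1 \in P) (H2 : S2 \in P) (H12 : S1 != S2)
  (n1 : p0 \notin S1) (n2 : p0 \notin S2) :
  (#|S1| <= #|S2| + 1).
Proof.
case: HP => [/and3P[_ tP s0] [win ne]].
have h0 : 0 < h by lia.
have : S1 != set0 by apply/negP => /eqP E; rewrite -E H1 in s0.
case/set0Pn => i iS1.
have iS2 : i \notin S2.
  move/trivIsetP: tP => /(_ _ _ H1 H2 H12) D; by rewrite (disjointFr D iS1).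
have w1 := win _ H1; have w2 := win _ H2.
rewrite /winning tstake_card // in w1; rewrite /winning tstake_card // in w2.
have [ne1 _] := ne _ _ H1 iS1.
have := ne1 _ H2; rewrite eq_sym => /(_ H12).
have ni : p0 \notin i |: S2.
  rewrite in_setU1 negb_or n2 andbT; apply/negP => /eqP E; by rewrite E iS1 in n1.
rewrite !shap_small // ?setU11 ?cardsU1 ?iS2 //=; last by lia.
rewrite lef_pV2 ?posrE ?ltr0n; last 2 first.
- by lia.
- by lia.
by rewrite ler_nat addnC.
Qed.

Theorem lemma3p8 (T : finType) (p0 : T) (a h : nat)
  (ha : 2 <= a) (hah : a <= h - 1)
  (P : {set {set T}}) (HP : nash_equilibrium p0 a h P)
  (S1 S2 : {set T}) (H1 : S1 \in P) (H2 : S2 \in P) (H12 : S1 != S2)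
  (n1 : p0 \notin S1) (n2 : p0 \notin S2) :
  (#|S1| <= #|S2| + 1) /\ (#|S2| <= #|S1| + 1).
Proof.
split; first exact: (@one_dir T p0 a h ha hah P HP S1 S2 H1 H2 H12 n1 n2).
have H21 : S2 != S1 by rewrite eq_sym.
exact: (@one_dir T p0 a h ha hah P HP S2 S1 H2 H1 H21 n2 n1).
Qed.
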